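(* Let $(\Omega,\mu)$ be a $\sigma$-finite measure space, $p_0\ge 1$, and let $f,g$ be measurable functions on $\Omega$ such that there exists $\tau_0\in(0,\infty)$ with $\lambda_f(\tau)\le\lambda_g(\tau)$ for $\tau<\tau_0$ and $\lambda_f(\tau)\ge\lambda_g(\tau)$ for $\tau>\tau_0$. Suppose $f\in L^{p_0}(\Omega)$ and $\|f\|_{p_0}\ge\|g\|_{p_0}$. Then for all $t>0$, \[ \int_0^t g^*(s)^{p_0}\,ds\le\int_0^t f^*(s)^{p_0}\,ds . \]
   Context: For a measurable $f$ on $(\Omega,\mu)$: the distribution function is $\lambda_f(\tau)=\mu\{x:|f(x)|>\tau\}$, $\tau>0$, and the nonincreasing rearrangement is $f^*(s)=\inf\{\tau>0:\lambda_f(\tau)\le s\}$, $s>0$. *)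

(* Defs.v *)
From HB Require Import structures.
From mathcomp Require Import all_boot all_order all_algebra.
From mathcomp Require Import all_classical all_reals all_analysis.
Set Implicit Arguments. Unset Strict Implicit. Unset Printing Implicit Defensive.
Import Order.TTheory GRing.Theory Num.Theory.
Local Open Scope classical_set_scope.
Local Open Scope ring_scope.

Definition distfun d (T : measurableType d) (R : realType)
  (mu : {measure set T -> \bar R}) (f : T -> R) (tau : R) : \bar R :=
  mu [set x | tau < `|f x|].

(* nonincreasing rearrangement f^*(s) = inf {tau > 0 : lambda_f(tau) <= s}
   (infimum in the extended reals; inf of the empty set is +oo) *)
Definition rearr d (T : measurableType d) (R : realType)
  (mu : {measure set T -> \bar R}) (f : T -> R) (s : R) : \bar R :=
  ereal_inf [set tau%:E | tau in [set tau : R | 0 < tau /\ (distfun mu f tau <= s%:E)%E]].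

(* Main.v *)
Require Import Defs.
From HB Require Import structures.
From mathcomp Require Import all_boot all_order all_algebra.
From mathcomp Require Import all_classical all_reals all_analysis.
From mathcomp Require Import measurable_realfun.
Import Order.TTheory GRing.Theory Num.Theory.
Local Open Scope classical_set_scope.
Local Open Scope ring_scope.
Section kernel.
Context {R : realType}.
Local Open Scope ereal_scope.
Lemma kernel_lc (a : \bar R) : 0 <= a ->
  \int[@lebesgue_measure R]_(s in `]0%R, +oo[) (\1_[set x : R | (x%:E < a)%E] s)%:E = a.
Proof.
move=> a0.
have ma : measurable [set x : R | (x%:E < a)%E].
  case: a a0 => [r||] _.
  - rewrite (_ : [set _ | _] = `]-oo, r[%classic); first exact: measurable_itv.
    by apply/seteqP; split => x /=; rewrite in_itv /= lte_fin.
  - rewrite (_ : [set _ | _] = setT); first exact: measurableT.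
    by apply/seteqP; split => x //= _; rewrite ltry.
  - rewrite (_ : [set _ | _] = set0); first exact: measurable0.
    by apply/seteqP; split => x //=.
rewrite integral_indic //.
case: a a0 ma => [r||] a0 _.
- rewrite (_ : _ `&` _ = `]0%R, r[%classic); last first.
    by apply/seteqP; split => x /=; rewrite !in_itv /= lte_fin ?andbT => -[]; [move=> -> ->|move=> /andP[-> ->]].
  etransitivity; first exact: lebesgue_measure_itv.
  rewrite /= lte_fin.
  case: ltP => r0; first by rewrite sube0.
  by apply/eqP; rewrite eq_le a0 /= lee_fin.
- rewrite (_ : _ `&` _ = `]0%R, +oo[%classic); last first.
    by apply/seteqP; split => x /=; [case|move=> ->; split=> //; rewrite ltry].
  etransitivity; first exact: lebesgue_measure_itv.
  by rewrite /= ltry.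
- by rewrite leeNy_eq in a0.
Qed.
End kernel.

Section LC.
Context {d} {T : measurableType d} {R : realType} (m : {measure set T -> \bar R}).
Hypothesis msf : sigma_finite setT m.
Let mm : set T -> \bar R := m.
HB.instance Definition _ := Measure.on mm.
HB.instance Definition _ := @Measure_isSigmaFinite.Build _ _ _ mm msf.
Local Open Scope ereal_scope.

Lemma layer_cake (u : T -> \bar R) : measurable_fun setT u -> (forall x, 0 <= u x) ->
  \int[m]_x u x =
  \int[@lebesgue_measure R]_(s in `]0%R, +oo[) m [set x | s%:E < u x].
Proof.
move=> mu u0.
pose A := [set z : T * measurableTypeR R | (0 < z.2)%R /\ (z.2)%:E < u z.1].
have mA : measurable A.
  rewrite (_ : A = ([set: T * measurableTypeR R] `&` [set z | (0 : \bar R) < (z.2)%:E]) `&`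
     ([set: T * measurableTypeR R] `&` [set z | (z.2)%:E < u z.1])); last first.
    by apply/seteqP; split => z /=; [case=> z0 zu; do 2 split=> //; rewrite lte_fin | case=> -[_ z0] [_ zu]; split=> //; rewrite -lte_fin].
  apply: measurableI; apply: measurable_lte => //.
  - apply/measurable_EFinP; exact: measurable_snd.
  - apply/measurable_EFinP; exact: measurable_snd.
  - by apply: measurableT_comp; [exact: mu|exact: measurable_fst].
pose F z := (\1_A z : R)%:E.
have mF : measurable_fun setT F by apply/measurable_EFinP; exact: measurable_indic.
have F0 : forall z, 0 <= F z by move=> z; rewrite lee_fin indicE; case: (_ \in _).
transitivity (\int[mm]_x \int[@lebesgue_measure R]_s F (x, s)).
  apply: eq_integral => x _.
  rewrite -[in LHS](@kernel_lc R (u x) (u0 x)) integral_mkcond.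
  apply: eq_integral => s _; rewrite patchE /F !indicE.
  have [s0|s0] := ltP 0%R s.
    rewrite mem_set; last by rewrite /= in_itv /= andbT.
    suff -> : ((x, s) \in A) = (s \in [set x0 | (x0%:E < u x)%E]) by [].
    apply/idP/idP => /set_mem.
    - by case=> _ ?; apply/mem_set.
    - by move=> ?; apply/mem_set.
  rewrite memNset; last by rewrite /= in_itv /= andbT; apply/negP; rewrite -leNgt.
  by rewrite memNset //= => -[] /=; rewrite ltNge s0.
rewrite (@fubini_tonelli _ _ _ _ _ mm (@lebesgue_measure R) F mF F0) [RHS]integral_mkcond.
apply: eq_integral => s _; rewrite patchE.
have [s0|s0] := ltP 0%R s.
  rewrite mem_set; last by rewrite /= in_itv /= andbT.
  have mAs : measurable [set x | s%:E < u x].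
    by rewrite -[X in measurable X]setTI; exact: emeasurable_fun_o_infty.
  rewrite -(setIT [set x | s%:E < u x]) -integral_indic //.
  apply: eq_integral => x _; rewrite /F !indicE.
  suff -> : ((x, s) \in A) = (x \in [set x0 | (s%:E < u x0)%E]) by [].
  apply/idP/idP => /set_mem.
  - by case=> _ ?; apply/mem_set.
  - by move=> ?; apply/mem_set.
rewrite memNset; last by rewrite /= in_itv /= andbT; apply/negP; rewrite -leNgt.
rewrite integral0_eq // => x _; rewrite /F indicE.
by rewrite memNset //= => -[] /=; rewrite ltNge s0.
Qed.
End LC.
Section mono.
Context {R : realType}.
Local Open Scope ereal_scope.
Lemma ni_emeas (D : set R) (u : R -> \bar R) : is_interval D ->
  {in D &, forall a b, (a <= b)%R -> u b <= u a} -> measurable_fun D u.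
Proof.
move=> iD ni.
apply: (measurability (@ErealGenOInfty.G R)) => [|/= _ [_] [r] -> <-].
  exact: ErealGenOInfty.measurableE.
apply: is_interval_measurable => a b [Da ua] [Db ub] y /andP[ay yb].
have Dy : D y by apply: (iD a b) => //; rewrite ay yb.
split => //; move: ub; rewrite /= !in_itv /= !andbT => ub.
by apply: lt_le_trans ub _; apply: ni; rewrite ?inE.
Qed.
End mono.
Section dist.
Context {d} {T : measurableType d} {R : realType} (mu : {measure set T -> \bar R}).
Context {h : T -> R} (mh : measurable_fun setT h).
Local Open Scope ereal_scope.

Lemma dist_meas (tau : R) : measurable [set x | (tau < `|h x|)%R].
Proof.
have mn : measurable_fun setT (fun x => `|h x|%R) :=
  measurableT_comp (@normr_measurable R setT) mh.
rewrite (_ : [set x | _] = setT `&` (fun x => `|h x|%R) @^-1` `]tau, +oo[).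
  by apply: mn => //; exact: measurable_itv.
by apply/seteqP; split => x /=; rewrite in_itv /= andbT //; case.
Qed.

Lemma dist_ni {t1 t2 : R} : (t1 <= t2)%R -> distfun mu h t2 <= distfun mu h t1.
Proof.
move=> t12; apply: le_measure; rewrite ?inE; try exact: dist_meas.
by move=> x /=; apply: le_lt_trans.
Qed.

Lemma dist_rc (tau : R) (s : \bar R) : s < distfun mu h tau ->
  exists n : nat, s < distfun mu h (tau + n.+1%:R^-1).
Proof.
move=> sl; apply/not_existsP => H.
have H' n : distfun mu h (tau + n.+1%:R^-1) <= s.
  by rewrite leNgt; apply/negP; exact: H n.
pose F n := [set x | (tau + n.+1%:R^-1 < `|h x|)%R].
have FU : \bigcup_n F n = [set x | (tau < `|h x|)%R].
  apply/seteqP; split => x /=.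
    by move=> [n _ /=]; apply: le_lt_trans; rewrite lerDl invr_ge0.
  by move=> /ltr_add_invr [k hk]; exists k.
have mF n : measurable (F n) by exact: dist_meas.
have ndF : nondecreasing_seq F.
  move=> n k nk; apply/subsetPset => x /=; apply: le_lt_trans; rewrite lerD2l lef_pV2 ?posrE //.
  by rewrite ler_nat.
have cv := @nondecreasing_cvg_mu _ _ _ mu _ mF (ltac:(rewrite FU; exact: dist_meas)) ndF.
have : mu (\bigcup_n F n) <= s.
  rewrite -(cvg_lim _ cv) //; apply: lime_le; first by apply/cvg_ex; eexists; exact: cv.
  by apply: nearW => n; exact: H'.
by rewrite FU leNgt sl.
Qed.

Lemma rearr_ge0 (s : R) : 0 <= rearr mu h s.
Proof.
by apply: le_ereal_inf_tmp => _ [tau [t0 _] <-]; rewrite lee_fin ltW.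
Qed.

Lemma rearr_ni (s1 s2 : R) : (s1 <= s2)%R -> rearr mu h s2 <= rearr mu h s1.
Proof.
move=> s12; apply: ereal_inf_le_tmp => _ [tau [t0 ts] <-].
by exists tau => //; split => //; apply: le_trans ts _; rewrite lee_fin.
Qed.

Lemma rearr_gtE (tau s : R) : (0 < tau)%R ->
  (tau%:E < rearr mu h s) = (s%:E < distfun mu h tau).
Proof.
move=> t0; apply/idP/idP.
  apply: contraTT; rewrite -!leNgt => ls.
  by apply: ereal_inf_lbound; exists tau.
move=> /dist_rc [n hn].
apply: (@lt_le_trans _ _ (tau + n.+1%:R^-1)%:E).
  by rewrite lte_fin ltrDl invr_gt0.
apply: le_ereal_inf_tmp => _ [sg [sg0 sgs] <-].
rewrite lee_fin leNgt; apply/negP => hlt.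
have := dist_ni (ltW hlt); rewrite leNgt => /negP; apply.
by apply: le_lt_trans sgs hn.
Qed.

End dist.
Section helpers.
Context {R : realType}.
Local Open Scope ereal_scope.

Lemma pow_ltE (sg p : R) (a : \bar R) : (0 < sg)%R -> (0 < p)%R -> 0 <= a ->
  (sg%:E < a `^ p) = ((sg `^ p^-1)%R%:E < a).
Proof.
move=> s0 p0; case: a => [r||] // a0.
- rewrite poweR_EFin !lte_fin.
  have qp : ((sg `^ p^-1) `^ p = sg)%R.
    by rewrite -powRrM mulVf ?gt_eqF // powRr1 ?ltW.
  have q0 : (sg `^ p^-1)%R \in Num.nneg by rewrite nnegrE powR_ge0.
  have r0 : r \in Num.nneg by rewrite nnegrE -lee_fin.
  rewrite -[X in (X < _)%R]qp; apply/idP/idP.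
    apply: contraTT; rewrite -!leNgt => rq.
    exact: (ge0_ler_powR (ltW p0) r0 q0 rq).
  by move=> qr; exact: (gt0_ltr_powR p0 q0 r0 qr).
- by rewrite poweRyr ?gt_eqF // !ltry.
Qed.

Lemma leb_trunc (t : R) (L : \bar R) : (0 < t)%R -> 0 <= L ->
  (@lebesgue_measure R) (`]0%R, t] `&` [set s | s%:E < L]) = mine L t%:E.
Proof.
move=> t0; case: L => [l||] // l0.
- have [lt|tl] := leP l t.
    rewrite min_l ?lee_fin //.
    rewrite (_ : _ `&` _ = `]0%R, l[%classic); last first.
      apply/seteqP; split => x /=; rewrite !in_itv /= ?lte_fin.
        by case=> /andP[-> _] ->.
      by move=> /andP[x0 xl]; split => //; rewrite x0 /= (le_trans (ltW xl) lt).
    etransitivity; first exact: lebesgue_measure_itv.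
    rewrite /= lte_fin; case: ltP => l0'; first by rewrite sube0.
    by apply/eqP; rewrite eq_le l0 /= lee_fin.
  rewrite min_r ?lee_fin ?ltW //.
  rewrite (_ : _ `&` _ = `]0%R, t]%classic); last first.
    apply/seteqP; split => x /=; rewrite !in_itv /= ?lte_fin; first by case.
    by move=> /andP[x0 xt]; split; [rewrite x0 xt|exact: le_lt_trans xt tl].
  etransitivity; first exact: lebesgue_measure_itv.
  by rewrite /= lte_fin t0 sube0.
- rewrite min_r ?leey //.
  rewrite (_ : _ `&` _ = `]0%R, t]%classic); last first.
    apply/seteqP; split => x /=; first by case.
    by move=> xi; split => //; rewrite ltry.
  etransitivity; first exact: lebesgue_measure_itv.
  by rewrite /= lte_fin t0 sube0.
Qed.

Lemma E1 (a b t : \bar R) : 0 <= a -> 0 <= b -> (a <= b \/ a <= t) ->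
  a + mine b t <= mine a t + b.
Proof.
move=> a0 b0 H.
have [aT|ta] := leP a t.
  apply: leeD => //.
  by case: (leP b t) => // /ltW.
have ab : a <= b by case: H => // /(lt_le_trans ta); rewrite ltxx.
rewrite min_r; last by rewrite (le_trans (ltW ta) ab).
by rewrite addeC; apply: leeD.
Qed.
Lemma min_mono (x y c : \bar R) : x <= y -> mine x c <= mine y c.
Proof.
move=> xy; case: (leP x c) => xc; case: (leP y c) => yc //.
by move: (lt_le_trans xc xy); rewrite ltNge yc.
Qed.
End helpers.

Theorem mainTheorem3 (d : measure_display) (T : measurableType d) (R : realType)
  (mu : {measure set T -> \bar R}) (p0 : R) (f g : T -> R) (tau0 : R) :
  sigma_finite setT mu ->
  1 <= p0 ->
  measurable_fun setT f -> measurable_fun setT g ->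
  0 < tau0 ->
  (forall tau, 0 < tau -> tau < tau0 -> (distfun mu f tau <= distfun mu g tau)%E) ->
  (forall tau, tau0 < tau -> (distfun mu g tau <= distfun mu f tau)%E) ->
  (Lnorm mu p0%:E (EFin \o f) < +oo)%E ->
  (Lnorm mu p0%:E (EFin \o g) <= Lnorm mu p0%:E (EFin \o f))%E ->
  forall t : R, 0 < t ->
    (\int[lebesgue_measure]_(s in `]0%R, t]%classic) (rearr mu g s `^ p0)
      <= \int[lebesgue_measure]_(s in `]0%R, t]%classic) (rearr mu f s `^ p0))%E.
Proof.
move=> sf p1 mf mg t0 Hlt Hgt Lf Lfg t tpos.
have p0pos : 0 < p0 by apply: lt_le_trans p1.
pose Phi h sg := distfun mu h (sg `^ p0^-1).
have D0m : measurable (`]0%R, +oo[%classic : set (measurableTypeR R)).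
  exact: measurable_itv.
have stepA : forall h : T -> R, measurable_fun setT h ->
    (\int[mu]_x (`|(EFin \o h) x| `^ p0) =
     \int[lebesgue_measure]_(sg in `]0%R, +oo[%classic) Phi h sg)%E.
  move=> h mh; rewrite (layer_cake _ sf).
  - apply: eq_integral => sg; rewrite inE /= in_itv /= andbT => sg0.
    rewrite /Phi /distfun; congr (mu _); apply/seteqP; split => x /=;
      have hx : (0 <= (`|h x|)%:E)%E by rewrite lee_fin.
      by move: (pow_ltE _ _ _ sg0 p0pos hx); rewrite poweR_EFin !lte_fin => ->.
    by move: (pow_ltE _ _ _ sg0 p0pos hx); rewrite poweR_EFin !lte_fin => ->.
  - apply: (@measurableT_comp _ _ _ _ _ _ (poweR ^~ p0) _
        (fun x => `|(EFin \o h) x|)%E); first exact: measurable_poweR.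
    apply: (@measurableT_comp _ _ _ _ _ _ abse _ (EFin \o h));
      first exact: abse_measurable.
    exact/measurable_EFinP.
  - by move=> x; exact: poweR_ge0.
have stepB : forall h : T -> R, measurable_fun setT h ->
    (\int[lebesgue_measure]_(s in `]0%R, t]%classic) (rearr mu h s `^ p0) =
     \int[lebesgue_measure]_(sg in `]0%R, +oo[%classic) mine (Phi h sg) t%:E)%E.
  move=> h mh; rewrite integral_mkcond.
  rewrite (layer_cake _ (sigma_finiteT (@lebesgue_measure R))).
  - apply: eq_integral => sg; rewrite inE /= in_itv /= andbT => sg0.
    rewrite -leb_trunc //.
    congr (lebesgue_measure _); apply/seteqP; split => s /=; rewrite patchE.
      case: ifPn => sD; last by rewrite lte_fin ltNge (ltW sg0).
      rewrite pow_ltE //; last exact: rearr_ge0.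
      rewrite rearr_gtE //; last exact: powR_gt0.
      by move=> H; split => //; exact: set_mem.
    case=> sD; rewrite mem_set //.
    rewrite pow_ltE //; last exact: rearr_ge0.
    by rewrite rearr_gtE //; exact: powR_gt0.
  - have mD : measurable (`]0%R, t]%classic : set (measurableTypeR R)).
      exact: measurable_itv.
    apply/(measurable_restrictT _ mD).
    apply: (@measurableT_comp _ _ _ _ _ _ (poweR ^~ p0) _ (rearr mu h));
      first exact: measurable_poweR.
    apply: ni_emeas; first exact: interval_is_interval.
    by move=> a b _ _ ab; exact: rearr_ni.
  - move=> s; rewrite patchE; case: ifPn => _; [exact: poweR_ge0|exact: lexx].
have KC : forall tau, tau0 <= tau -> (distfun mu g tau <= distfun mu f tau)%E.
  move=> tau; rewrite le_eqVlt => /predU1P[<-|]; last exact: Hgt.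
  rewrite leNgt; apply/negP => /(dist_rc mu mg) [n hn].
  have d0 : tau0 < tau0 + n.+1%:R^-1 by rewrite ltrDl invr_gt0.
  have := lt_le_trans hn (Hgt _ d0).
  have := dist_ni mu mf (ltW d0).
  by move=> a b; move: (le_lt_trans a b); rewrite ltxx.
have NE : forall h : T -> R, Lnorm mu p0%:E (EFin \o h) =
    ((\int[mu]_x (`|(EFin \o h) x| `^ p0)) `^ p0^-1)%E.
  by move=> h; rewrite unlock.
have N0 : forall h : T -> R, (0 <= \int[mu]_x (`|(EFin \o h) x| `^ p0))%E.
  by move=> h; apply: integral_ge0 => x _; exact: poweR_ge0.
have NgNf : (\int[mu]_x (`|(EFin \o g) x| `^ p0) <=
             \int[mu]_x (`|(EFin \o f) x| `^ p0))%E.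
  move: Lfg; rewrite !NE => H.
  have := @gt0_ler_poweR R p0 (ltW p0pos) _ _ _ _ H.
  rewrite -!poweRrM mulVf ?gt_eqF // !poweRe1 //; apply.
  - by rewrite in_itv /= poweR_ge0 leey.
  - by rewrite in_itv /= poweR_ge0 leey.
have Nffin : (\int[mu]_x (`|(EFin \o f) x| `^ p0) < +oo)%E.
  move: Lf; rewrite NE; apply: lty_poweRy.
  by rewrite invr_neq0 // gt_eqF.
rewrite (stepA g mg) in NgNf; rewrite (stepA f mf) in NgNf Nffin.
rewrite (stepB g mg) (stepB f mf).
have Phi0 : forall (h : T -> R) sg, (0 <= Phi h sg)%E by move=> h sg; exact: measure_ge0.
have mPhi : forall h : T -> R, measurable_fun setT h ->
    measurable_fun (`]0%R, +oo[%classic : set (measurableTypeR R)) (Phi h).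
  move=> h mh; apply: ni_emeas; first exact: interval_is_interval.
  move=> a b; rewrite !inE /= !in_itv /= !andbT => a0 b0 ab.
  apply: dist_ni => //; apply: ge0_ler_powR => //; rewrite ?nnegrE ?invr_ge0; exact: ltW.
have mmin : forall h : T -> R, measurable_fun setT h ->
    measurable_fun (`]0%R, +oo[%classic : set (measurableTypeR R))
      (fun sg => mine (Phi h sg) t%:E).
  move=> h0 mh0; apply: ni_emeas; first exact: interval_is_interval.
  move=> a b; rewrite !inE /= !in_itv /= !andbT => a0 b0 ab.
  apply: min_mono; apply: dist_ni => //; apply: ge0_ler_powR => //;
    rewrite ?nnegrE ?invr_ge0; exact: ltW.
have min0 : forall (h : T -> R) sg, (0 <= mine (Phi h sg) t%:E)%E.
  move=> h sg; case: (leP (Phi h sg) t%:E) => _ //.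
  by rewrite lee_fin ltW.
have [[tau1 [t1pos [t1lt t1d]]]|nocase] :=
  pselect (exists tau1, 0 < tau1 /\ tau1 < tau0 /\ (distfun mu f tau1 < t%:E)%E).
  have pw : forall sg, `]0%R, +oo[%classic sg ->
      (Phi f sg + mine (Phi g sg) t%:E <= mine (Phi f sg) t%:E + Phi g sg)%E.
    move=> sg; rewrite /= in_itv /= andbT => sg0.
    apply: E1 => //; rewrite /Phi.
    have [ht|ht] := ltP (sg `^ p0^-1) tau0.
      by left; apply: Hlt => //; exact: powR_gt0.
    right; apply: ltW; apply: le_lt_trans t1d; apply: dist_ni => //.
    exact: le_trans (ltW t1lt) ht.
  have H : (\int[lebesgue_measure]_(sg in `]0%R, +oo[%classic)
      (Phi f sg + mine (Phi g sg) t%:E) <=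
      \int[lebesgue_measure]_(sg in `]0%R, +oo[%classic)
      (mine (Phi f sg) t%:E + Phi g sg))%E.
    apply: ge0_le_integral => //.
    - by move=> x _; apply: adde_ge0.
    - by apply: emeasurable_funD; [exact: (mPhi f mf)|exact: (mmin g mg)].
    - by apply: emeasurable_funD; [exact: (mmin f mf)|exact: (mPhi g mg)].
  have E1' : (\int[lebesgue_measure]_(sg in `]0%R, +oo[%classic)
      (Phi f sg + mine (Phi g sg) t%:E) =
      \int[lebesgue_measure]_(sg in `]0%R, +oo[%classic) Phi f sg +
      \int[lebesgue_measure]_(sg in `]0%R, +oo[%classic) mine (Phi g sg) t%:E)%E.
    by rewrite ge0_integralD //; [exact: (mPhi f mf)|exact: (mmin g mg)].
  have E2' : (\int[lebesgue_measure]_(sg in `]0%R, +oo[%classic)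
      (mine (Phi f sg) t%:E + Phi g sg) =
      \int[lebesgue_measure]_(sg in `]0%R, +oo[%classic) mine (Phi f sg) t%:E +
      \int[lebesgue_measure]_(sg in `]0%R, +oo[%classic) Phi g sg)%E.
    by rewrite ge0_integralD //; [exact: (mmin f mf)|exact: (mPhi g mg)].
  move: H; rewrite E1' E2'.
  move=> H.
  set Nf := (\int[lebesgue_measure]_(sg in _) Phi f sg)%E in NgNf Nffin H.
  set Ng := (\int[lebesgue_measure]_(sg in _) Phi g sg)%E in NgNf H.
  set If := (\int[lebesgue_measure]_(sg in _) mine (Phi f sg) t%:E)%E in H *.
  set Ig := (\int[lebesgue_measure]_(sg in _) mine (Phi g sg) t%:E)%E in H *.
  have Ng0 : (0 <= Ng)%E by apply: integral_ge0 => x _; exact: Phi0.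
  have Ngfin : Ng \is a fin_num.
    by rewrite ge0_fin_numE //; exact: le_lt_trans NgNf Nffin.
  rewrite -(leeD2lE _ _ Ngfin); rewrite [X in (_ <= X)%E]addeC.
  apply: le_trans H; exact: leeD.
apply: ge0_le_integral => //; [exact: (mmin g mg)|exact: (mmin f mf)|].
move=> sg; rewrite /= in_itv /= andbT => sg0; rewrite /Phi.
have tp : 0 < sg `^ p0^-1 by exact: powR_gt0.
have [ht|ht] := ltP (sg `^ p0^-1) tau0; last by apply: min_mono; apply: KC.
have ft : (t%:E <= distfun mu f (sg `^ p0^-1))%E.
  rewrite leNgt; apply/negP => H; apply: nocase.
  by exists (sg `^ p0^-1).
apply: (@le_trans _ _ t%:E).
  by case: (leP (distfun mu g (sg `^ p0^-1)) t%:E).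
by case: (leP (distfun mu f (sg `^ p0^-1)) t%:E).
Qed.
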